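(* Let $G$ be a Tanner graph with largest right (check-node) degree $d_r^+$. If $p$ is any lift-realizable pseudocodeword of $G$ and $b$ is its maximum component, then the smallest degree of a lift of $G$ in which $p$ is realized is at most $\frac{b\,d_r^+}{2}$.
   Context: A Tanner graph $G$ is a finite bipartite graph with variable nodes $v_1,\dots,v_n$ and check nodes; it defines the binary code of all $x\in\{0,1\}^n$ such that every check node has an even number of neighbours $v_i$ with $x_i=1$. A degree-$\ell$ lift of $G$ replaces each node by a cloud of $\ell$ copies and each edge $(x,y)$ by a perfect matching between the clouds. A lift-realizable pseudocodeword $p\in\mathbb{Z}_{\ge0}^n$ is obtained (realized) from a codeword of the code of some finite lift by letting $p_i$ be the number of copies of $v_i$ assigned 1. *)

(* Defs.v *)
From mathcomp Require Import all_boot fingroup perm.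
Set Implicit Arguments. Unset Strict Implicit. Unset Printing Implicit Defensive.

(* A Tanner graph with variable nodes 'I_n and check nodes 'I_m, given by its
   (simple) bipartite adjacency relation E : variable -> check -> bool. *)
Record tanner_graph := TannerGraph {
  tg_n : nat;
  tg_m : nat;
  tg_adj : 'I_tg_n -> 'I_tg_m -> bool }.
Arguments tg_adj : clear implicits.

Definition check_deg (G : tanner_graph) (j : 'I_(tg_m G)) : nat :=
  #|[set i : 'I_(tg_n G) | tg_adj G i j]|.

Definition max_check_deg (G : tanner_graph) : nat :=
  \max_(j : 'I_(tg_m G)) check_deg j.

(* A degree-l lift is given by a permutation (perfect matching between the
   clouds) sigma i j for every edge (i,j): copy (i,a) is joined to (j, sigma i j a).
   (Values of sigma on non-edges are irrelevant.) *)
Definition lift_assignment (G : tanner_graph) (l : nat) :=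
  'I_(tg_n G) -> 'I_(tg_m G) -> {perm 'I_l}.

(* A set X of variable copies (those assigned 1) is a codeword of the lifted
   code: each check copy (j,c) has an even number of neighbours in X. *)
Definition lift_codeword (G : tanner_graph) (l : nat)
  (sigma : lift_assignment G l) (X : {set 'I_(tg_n G) * 'I_l}) : bool :=
  [forall j : 'I_(tg_m G), forall c : 'I_l,
     ~~ odd #|[set ia in X | tg_adj G ia.1 j && (sigma ia.1 j ia.2 == c)]|].

Definition pcw_of (G : tanner_graph) (l : nat) (X : {set 'I_(tg_n G) * 'I_l})
  (i : 'I_(tg_n G)) : nat :=
  #|[set a : 'I_l | (i, a) \in X]|.

Definition realized_in_degree (G : tanner_graph) (p : 'I_(tg_n G) -> nat) (l : nat) : Prop :=
  0 < l /\ exists (sigma : lift_assignment G l) (X : {set 'I_(tg_n G) * 'I_l}),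
    lift_codeword sigma X /\ forall i, pcw_of X i = p i.

Definition lift_realizable (G : tanner_graph) (p : 'I_(tg_n G) -> nat) : Prop :=
  exists l, realized_in_degree p l.

Definition max_comp (G : tanner_graph) (p : 'I_(tg_n G) -> nat) : nat :=
  \max_(i : 'I_(tg_n G)) p i.

(* Main.v *)
Require Import Defs.
From mathcomp Require Import all_boot fingroup perm.
From mathcomp Require Import zify.
Set Implicit Arguments. Unset Strict Implicit. Unset Printing Implicit Defensive.
Lemma card_sum (T : finType) (P : pred T) : #|[set x | P x]| = \sum_x (P x : nat).
Proof.
rewrite -sum1_card big_mkcond /=; apply: eq_bigr => x _; by rewrite inE; case: (P x).
Qed.

Lemma sum_eq1 (T : finType) (x : T) : \sum_y ((x == y) : nat) = 1.
Proof.
rewrite (bigD1 x) //= eqxx big1 // => y; rewrite eq_sym => /negbTE -> //.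
Qed.

Lemma card_lt (l q : nat) : q <= l -> #|[set a : 'I_l | a < q]| = q.
Proof.
move=> hq; rewrite card_sum -big_mkcond /= -(big_ord_widen _ (fun _ => 1) hq).
by rewrite sum1_card card_ord.
Qed.

Lemma tele n (q : 'I_n -> nat) (g : nat -> nat) :
  \sum_(i < n) \sum_(s < q i) g (\sum_(k < n | k < i) q k + s)
  = \sum_(s < \sum_(i < n) q i) g s.
Proof.
elim: n q => [|n IH] q; first by rewrite !big_ord0.
rewrite big_ord_recr /=.
have E : forall i : 'I_n, \sum_(k < n.+1 | k < widen_ord (leqnSn n) i) q k
   = \sum_(k < n | k < i) q (widen_ord (leqnSn n) k).
  move=> i; rewrite big_mkcond big_ord_recr /= ltnNge (ltnW (ltn_ord i)) /= addn0.
  by rewrite [RHS]big_mkcond.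
under eq_bigr => i _ do rewrite E.
rewrite (IH (fun k => q (widen_ord (leqnSn n) k))).
have E2 : \sum_(k < n.+1 | k < (@ord_max n)) q k = \sum_(i < n) q (widen_ord (leqnSn n) i).
  rewrite big_mkcond big_ord_recr /= ltnn addn0; apply: eq_bigr => i _.
  by rewrite ltn_ord.
rewrite E2 [in RHS]big_ord_recr /=.
by rewrite big_split_ord /=.
Qed.

Section Nec.
Variables (G : tanner_graph) (p : 'I_(tg_n G) -> nat) (l0 : nat)
  (sigma0 : lift_assignment G l0) (X0 : {set 'I_(tg_n G) * 'I_l0}).
Hypothesis Hcw : lift_codeword sigma0 X0.
Hypothesis Hp : forall i, pcw_of X0 i = p i.

Lemma sum_cnt j (Q : pred 'I_(tg_n G)) :
 \sum_(c : 'I_l0) \sum_(ia : 'I_(tg_n G) * 'I_l0)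
    ((ia \in X0) && tg_adj G ia.1 j && Q ia.1 && (sigma0 ia.1 j ia.2 == c) : nat)
 = \sum_i (tg_adj G i j && Q i) * p i.
Proof.
rewrite exchange_big /=.
transitivity (\sum_(ia : 'I_(tg_n G) * 'I_l0) ((ia \in X0) && tg_adj G ia.1 j && Q ia.1 : nat)).
  apply: eq_bigr => ia _; case: (_ && _ && _) => /=; first by rewrite sum_eq1.
  by rewrite big1.
rewrite (eq_bigr (fun ia => (((ia.1, ia.2) \in X0) && tg_adj G ia.1 j && Q ia.1 : nat))); last by case.
rewrite -(pair_bigA _ (fun i a => (((i, a) \in X0) && tg_adj G i j && Q i : nat))) /=.
apply: eq_bigr => i _; case: (tg_adj G i j) => /=; last by rewrite big1 // => a; rewrite andbF.
case: (Q i) => /=; last by rewrite big1 // => a; rewrite andbF.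
rewrite mul1n -Hp /pcw_of card_sum; apply: eq_bigr => a _; by rewrite !andbT.
Qed.

Lemma cnt_even j (c : 'I_l0) :
  ~~ odd (\sum_(ia : 'I_(tg_n G) * 'I_l0)
    ((ia \in X0) && tg_adj G ia.1 j && (sigma0 ia.1 j ia.2 == c) : nat)).
Proof.
move: Hcw => /forallP /(_ j) /forallP /(_ c); rewrite card_sum.
by rewrite (eq_bigr (fun ia => ((ia \in X0) && tg_adj G ia.1 j && (sigma0 ia.1 j ia.2 == c) : nat))) // => ia _; rewrite andbA.
Qed.

Lemma nec_even j : ~~ odd (\sum_i tg_adj G i j * p i).
Proof.
rewrite -dvdn2.
rewrite (eq_bigr (fun i => (tg_adj G i j && xpredT i) * p i)); last by move=> i _; rewrite andbT.
rewrite -sum_cnt; apply: dvdn_sum => c _; rewrite dvdn2.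
by rewrite (eq_bigr (fun ia => ((ia \in X0) && tg_adj G ia.1 j && (sigma0 ia.1 j ia.2 == c) : nat))) ?cnt_even // => ia _; rewrite andbT.
Qed.

Lemma nec_le i j : tg_adj G i j ->
  p i <= \sum_k (tg_adj G k j && (k != i)) * p k.
Proof.
move=> hij.
have -> : p i = \sum_k (tg_adj G k j && (k == i)) * p k.
  rewrite (bigD1 i) //= hij eqxx mul1n big1 ?addn0 // => k /negbTE ->; by rewrite andbF.
rewrite -!sum_cnt; apply: leq_sum => c _.
set B := \sum_ia _; set C := \sum_ia _.
have HB : B <= 1.
  rewrite -(sum_eq1 (i, ((sigma0 i j)^-1)%g c)); apply: leq_sum => ia _.
  case: ia => k a /=; case: (k =P i) => [->|]; last by rewrite andbF.
  case: eqP => [e|]; last by rewrite andbF.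
  by rewrite xpair_eqE eqxx /= -e permK eqxx leq_b1.
have HBC : B + C = \sum_(ia : 'I_(tg_n G) * 'I_l0)
    ((ia \in X0) && tg_adj G ia.1 j && (sigma0 ia.1 j ia.2 == c) : nat).
  rewrite /B /C -big_split /=; apply: eq_bigr => ia _.
  by case: (ia \in X0); case: (tg_adj G ia.1 j); case: (ia.1 == i); case: (_ == c).
have := cnt_even j c; rewrite -HBC.
clearbody B C; move=> Hodd; clear HBC; move: HB Hodd; case: B => [|[|]] //= _; case: C => //.
Qed.
End Nec.
Section Cons.
Variables (G : tanner_graph) (p : 'I_(tg_n G) -> nat).
Definition Sj j := \sum_(i < tg_n G) tg_adj G i j * p i.
Definition hj j := Sj j %/ 2.
Definition LL := \max_(j : 'I_(tg_m G)) hj j.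
Definition offj j (i : 'I_(tg_n G)) := \sum_(k < tg_n G | k < i) tg_adj G k j * p k.
Definition sf i j (a : 'I_LL) : nat := if a < hj j then (a + offj j i) %% hj j else a.
Lemma sf_lt i j a : sf i j a < LL.
Proof.
rewrite /sf; case: ifP => [ha|_]; last exact: ltn_ord.
have h0 : 0 < hj j by apply: leq_ltn_trans ha.
apply: (leq_trans (ltn_pmod _ h0)); rewrite /LL; exact: leq_bigmax.
Qed.
Definition sfo i j a : 'I_LL := Ordinal (sf_lt i j a).
Lemma sfo_inj i j : injective (sfo i j).
Proof.
move=> a b /(congr1 val); rewrite /= /sf => e; apply: val_inj => /=.
move: e; case: ifP => ha; case: ifP => hb.
- move/eqP; rewrite eqn_modDr !modn_small // => /eqP //.
- move=> e; have h0 : 0 < hj j by apply: leq_ltn_trans ha.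
  have := ltn_pmod (a + offj j i) h0; rewrite e hb //.
- move=> e; have h0 : 0 < hj j by apply: leq_ltn_trans hb.
  have := ltn_pmod (b + offj j i) h0; rewrite -e ha //.
- by [].
Qed.
Definition sig : lift_assignment G LL := fun i j => perm (@sfo_inj i j).
Definition Xc : {set 'I_(tg_n G) * 'I_LL} := [set ia : 'I_(tg_n G) * 'I_LL | ia.2 < p ia.1].

Hypothesis Hev : forall j, ~~ odd (Sj j).
Hypothesis Hle : forall i j, tg_adj G i j -> p i <= hj j.
Hypothesis Hnb : forall i : 'I_(tg_n G), exists j : 'I_(tg_m G), tg_adj G i j.

Lemma pL i : p i <= LL.
Proof.
have [j hj'] := Hnb i; apply: leq_trans (Hle hj') _; rewrite /LL; exact: leq_bigmax.
Qed.

Lemma ShH j : Sj j = hj j + hj j.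
Proof. have := Hev j; rewrite /hj -dvdn2 => /divnK; lia. Qed.

Lemma cons_cw : lift_codeword sig Xc.
Proof.
apply/forallP => j; apply/forallP => c; rewrite card_sum.
rewrite (eq_bigr (fun ia => ((ia.1, ia.2) \in Xc) && (tg_adj G ia.1 j && (sig ia.1 j ia.2 == c)) : nat)); last by case.
rewrite -(pair_bigA _ (fun i a => (((i, a) \in Xc) && (tg_adj G i j && (sig i j a == c)) : nat))) /=.
rewrite (eq_bigr (fun i => \sum_(s < tg_adj G i j * p i) ((offj j i + s) %% hj j == c : nat))); last first.
  move=> i _; case hij: (tg_adj G i j); last by rewrite mul0n big_ord0 big1 // => a; rewrite andbF.
  rewrite mul1n (big_ord_widen _ (fun s => ((offj j i + s) %% hj j == c : nat)) (pL i)) [RHS]big_mkcond; apply: eq_bigr => a _.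
  rewrite inE /=; case: ltnP => //= ha.
  by rewrite permE /sfo -val_eqE /= /sf (leq_trans ha (Hle hij)) addnC.
rewrite /offj (tele (fun i => tg_adj G i j * p i) (fun s => (s %% hj j == c : nat))).
rewrite -/(Sj j) ShH big_split_ord /=.
rewrite [X in _ + X](eq_bigr (fun s : 'I_(hj j) => (s %% hj j == c : nat))); last first.
  by move=> s _; rewrite modnDl.
by rewrite addnn odd_double.
Qed.

Hypothesis Hnz : exists i, p i != 0.

Lemma cons_real : realized_in_degree p LL.
Proof.
split.
  have [i hi] := Hnz; apply: leq_trans (pL i); by rewrite lt0n.
exists sig, Xc; split; first exact: cons_cw.
move=> i; rewrite /pcw_of -(card_lt (pL i)); apply: eq_card => a; by rewrite !inE.
Qed.

Lemma cons_bound : 2 * LL <= max_comp p * max_check_deg G.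
Proof.
set N := max_comp p * max_check_deg G.
suff : LL <= N %/ 2 by lia.
apply/bigmax_leqP => j _.
suff : Sj j <= N by rewrite /hj; lia.
apply: (@leq_trans (\sum_(i < tg_n G) tg_adj G i j * max_comp p)).
  apply: leq_sum => i _; rewrite leq_mul2l; apply/orP; right; rewrite /max_comp; exact: leq_bigmax.
rewrite -big_distrl /= mulnC leq_mul2l; apply/orP; right.
rewrite /max_check_deg; apply: leq_trans (leq_bigmax j); by rewrite /check_deg card_sum.
Qed.
End Cons.

Theorem corollary2 (G : tanner_graph) (p : 'I_(tg_n G) -> nat) :
  (forall i : 'I_(tg_n G), exists j : 'I_(tg_m G), tg_adj G i j) ->
  (exists i, p i != 0) ->
  lift_realizable p ->
  exists l, realized_in_degree p l /\ 2 * l <= max_comp p * max_check_deg G.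
Proof.
move=> Hnb Hnz [l0 [_ [sigma0 [X0 [Hcw Hp]]]]].
have Hev : forall j, ~~ odd (Sj p j) by move=> j; exact: (nec_even Hcw Hp).
have Hle : forall i j, tg_adj G i j -> p i <= hj p j.
  move=> i j hij; have H := nec_le Hcw Hp hij.
  have E : Sj p j = p i + \sum_k (tg_adj G k j && (k != i)) * p k.
    rewrite /Sj (bigD1 i) //= hij mul1n; congr (_ + _).
    rewrite [RHS](bigD1 i) //= eqxx andbF mul0n add0n big_mkcond /=.
    rewrite [RHS]big_mkcond /=; apply: eq_bigr => k _; case: (k != i) => //=; by rewrite andbT.
  rewrite /hj E; lia.
exists (LL p); split; first exact: cons_real.
exact: cons_bound.
Qed.
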